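(* Let $X$ be a complete nonsingular toric variety with fan $\Delta$. The following are equivalent: (i) $X$ is Fano, and every toric subvariety of $X$ is Fano; (ii) for every primitive set $\{D_1,\ldots,D_k\}$, either $\rho_1+\cdots+\rho_k=0$ or $\rho_1+\cdots+\rho_k=\rho'$ for some ray generator $\rho'$ of $\Delta$; (iii) for every maximal cone $\mu=\langle\rho_1,\ldots,\rho_n\rangle$ of $\Delta$ and every ray generator $\rho$, writing $\rho=b_1\rho_1+\cdots+b_n\rho_n$, we have $-1\le b_j\le1$ for all $j$, with $b_j=1$ for at most one $j$.
   Context: $\Delta$ is a complete fan in $N_{\mathbb R}$, $N\cong\mathbb{Z}^n$, each cone generated by part of a $\mathbb{Z}$-basis. Each ray has a primitive generator $\rho$ (ray generator) and corresponding toric divisor $D$; toric divisors meet iff their ray generators span a cone. A toric subvariety is a torus-orbit closure $X(\sigma)$, $\sigma\in\Delta$. A primitive set is a set $\{D_1,\ldots,D_k\}$ of toric divisors with $D_1\cap\cdots\cap D_k=\emptyset$ but every proper subset having nonempty intersection. *)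

(* Defs.v *)
From HB Require Import structures.
From mathcomp Require Import all_boot all_order all_algebra.
From mathcomp Require Import reals.
Set Implicit Arguments. Unset Strict Implicit. Unset Printing Implicit Defensive.
Import Order.TTheory GRing.Theory Num.Theory.
Local Open Scope ring_scope.

(* A fan Delta in N_R = R^n, N = Z^n, is encoded by:
   - m ray generators  ray : 'I_m -> 'rV[int]_n  (the lattice N = Z^n);
   - a set C of cones, each cone given by the set of indices of its rays
     (cones of a nonsingular fan are simplicial, so are determined by rays). *)

Section Fan.
Variables (R : realType) (n m : nat) (ray : 'I_m -> 'rV[int]_n).

Definition rvR (v : 'rV[int]_n) : 'rV[R]_n := map_mx (fun z : int => z%:~R) v.

Definition in_cone (A : {set 'I_m}) (x : 'rV[R]_n) : Prop :=
  exists c : 'I_m -> R, (forall i, 0 <= c i) /\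
    x = \sum_(i in A) c i *: rvR (ray i).

Definition part_of_basis (A : {set 'I_m}) : Prop :=
  exists B : 'M[int]_n, \det B \is a GRing.unit /\
    forall i, i \in A -> exists j : 'I_n, row j B = ray i.

Definition smooth_fan (C : {set {set 'I_m}}) : Prop :=
  [/\ injective ray,
      forall i, [set i] \in C,
      forall A B : {set 'I_m}, A \in C -> B \subset A -> B \in C,
      forall A : {set 'I_m}, A \in C -> part_of_basis A &
      forall (A B : {set 'I_m}) x, A \in C -> B \in C -> in_cone A x -> in_cone B x ->
        in_cone (A :&: B) x].

Definition complete_fan (C : {set {set 'I_m}}) : Prop :=
  forall x : 'rV[R]_n, exists2 A, A \in C & in_cone A x.

Definition maximal_cone (C : {set {set 'I_m}}) (A : {set 'I_m}) : Prop :=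
  A \in C /\ forall B : {set 'I_m}, B \in C -> A \subset B -> B = A.

Definition pairing (u : 'rV[R]_n) (v : 'rV[int]_n) : R :=
  \sum_(k < n) u 0 k * (v 0 k)%:~R.

(* The toric subvariety X(tau) (tau in C) has fan Star(tau) in
   N(tau)_R = N_R / span(tau): its rays are the images of the rays j
   with j \notin tau and tau :|: [set j] \in C, its maximal cones are the
   images of the maximal cones sigma \supseteq tau, and linear functionals
   on N(tau)_R are the functionals on N_R vanishing on tau.
   X(tau) is Fano iff its anticanonical divisor (the sum of its toric
   divisors) is ample, i.e. (toric ampleness criterion, strict convexity of
   the support function) for every maximal cone sigma of Star(tau) there is
   u with <u, rho> = 1 on the rays of sigma, and <u, rho> < 1 on every
   other ray of Star(tau).  For tau = set0 this is "X is Fano". *)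
Definition fano_orbit_closure (C : {set {set 'I_m}}) (tau : {set 'I_m}) : Prop :=
  forall sigma : {set 'I_m}, maximal_cone C sigma -> tau \subset sigma ->
    exists u : 'rV[R]_n,
      [/\ forall i, i \in tau -> pairing u (ray i) = 0,
          forall i, i \in sigma -> i \notin tau -> pairing u (ray i) = 1 &
          forall j, j \notin sigma -> tau :|: [set j] \in C ->
            pairing u (ray j) < 1].

(* {D_i : i in S} is a primitive set: the rays in S do not span a cone
   (the divisors have empty intersection) but every proper subset does. *)
Definition primitive_set (C : {set {set 'I_m}}) (S : {set 'I_m}) : Prop :=
  S \notin C /\ forall T : {set 'I_m}, T \proper S -> T \in C.

Definition cond_i (C : {set {set 'I_m}}) : Prop :=
  fano_orbit_closure C set0 /\
  forall tau : {set 'I_m}, tau \in C -> fano_orbit_closure C tau.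

Definition cond_ii (C : {set {set 'I_m}}) : Prop :=
  forall S : {set 'I_m}, primitive_set C S ->
    \sum_(i in S) ray i = 0 \/ exists j, \sum_(i in S) ray i = ray j.

Definition cond_iii (C : {set {set 'I_m}}) : Prop :=
  forall mu : {set 'I_m}, maximal_cone C mu -> forall k (b : 'I_m -> R),
    rvR (ray k) = \sum_(i in mu) b i *: rvR (ray i) ->
    (forall i, i \in mu -> -1 <= b i <= 1) /\
    (#|[set i in mu | b i == 1%R]| <= 1)%N.

End Fan.

(* Main.v *)
Require Import Defs.
From mathcomp Require Import all_boot all_order all_algebra.
From mathcomp Require Import reals.
From Stdlib Require Import Classical.
From mathcomp Require Import lra zify.
Set Implicit Arguments. Unset Strict Implicit. Unset Printing Implicit Defensive.
Import Order.TTheory GRing.Theory Num.Theory.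
Local Open Scope ring_scope.

Section Toric.
Variables (R : realType) (n m : nat) (ray : 'I_m -> 'rV[int]_n)
  (C : {set {set 'I_m}}).
Hypothesis Hfan : smooth_fan R ray C.
Hypothesis Hcomplete : complete_fan R ray C.

Local Notation rho i := (rvR R (ray i)).

Definition pv (u x : 'rV[R]_n) : R := \sum_k u 0 k * x 0 k.
Definition comb (A : {set 'I_m}) (c : 'I_m -> R) : 'rV[R]_n :=
  \sum_(i in A) c i *: rho i.
Definition ipr (u v : 'rV[int]_n) : int := \sum_k u 0 k * v 0 k.
Definition wt (A : {set 'I_m}) : 'rV[R]_n := \sum_(i in A) rho i.

Lemma pairingE u v : pairing u v = pv u (rvR R v).
Proof. by apply: eq_bigr => k _; rewrite mxE. Qed.

Lemma pvD u x y : pv u (x + y) = pv u x + pv u y.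
Proof. by rewrite /pv -big_split; apply: eq_bigr => k _; rewrite mxE mulrDr. Qed.

Lemma pv0 u : pv u 0 = 0.
Proof. by rewrite /pv big1 // => k _; rewrite mxE mulr0. Qed.

Lemma pvZ u a x : pv u (a *: x) = a * pv u x.
Proof. by rewrite /pv mulr_sumr; apply: eq_bigr => k _; rewrite mxE mulrCA. Qed.

Lemma pvN u x : pv u (- x) = - pv u x.
Proof. by rewrite -scaleN1r pvZ mulN1r. Qed.

Lemma pvB u x y : pv u (x - y) = pv u x - pv u y.
Proof. by rewrite pvD pvN. Qed.

Lemma pv_sum u (I : finType) (P : pred I) (F : I -> 'rV[R]_n) :
  pv u (\sum_(i | P i) F i) = \sum_(i | P i) pv u (F i).
Proof. by apply: (big_morph (pv u)); [exact: pvD | exact: pv0]. Qed.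

Lemma pv_comb u A c : pv u (comb A c) = \sum_(i in A) c i * pv u (rho i).
Proof. by rewrite /comb pv_sum; apply: eq_bigr => i _; rewrite pvZ. Qed.

Lemma pv_wt u A : pv u (wt A) = \sum_(i in A) pv u (rho i).
Proof. by rewrite /wt pv_sum. Qed.

Lemma pv_rvR (u v : 'rV[int]_n) : pv (rvR R u) (rvR R v) = (ipr u v)%:~R.
Proof.
rewrite /pv /ipr rmorph_sum; apply: eq_bigr => k _.
by rewrite !mxE rmorphM.
Qed.

Lemma rvRD (u v : 'rV[int]_n) : rvR R (u + v) = rvR R u + rvR R v.
Proof. by apply/matrixP => i j; rewrite !mxE rmorphD. Qed.

Lemma rvR0 : rvR R (0 : 'rV[int]_n) = 0.
Proof. by apply/matrixP => i j; rewrite !mxE. Qed.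

Lemma rvR_sum (I : finType) (P : pred I) (F : I -> 'rV[int]_n) :
  rvR R (\sum_(i | P i) F i) = \sum_(i | P i) rvR R (F i).
Proof. exact: (big_morph (@rvR R n) rvRD rvR0). Qed.

Lemma rvR_inj (u v : 'rV[int]_n) : rvR R u = rvR R v -> u = v.
Proof.
move=> /matrixP H; apply/matrixP => i j.
by move: (H i j); rewrite !mxE => /intr_inj.
Qed.

Lemma sum_delta (A : {set 'I_m}) (c : 'I_m -> R) a : a \in A ->
  \sum_(i in A) c i * (i == a)%:R = c a.
Proof.
move=> aA; rewrite (bigD1 a) //= eqxx mulr1 big1 ?addr0 // => i /andP[_ /negbTE ->].
by rewrite mulr0.
Qed.

Let Hinj : injective ray. Proof. by case: Hfan. Qed.
Let Hsing : forall i, [set i] \in C. Proof. by case: Hfan. Qed.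
Let Hsub : forall A B : {set 'I_m}, A \in C -> B \subset A -> B \in C.
Proof. by case: Hfan. Qed.
Let Hpob : forall A : {set 'I_m}, A \in C -> part_of_basis ray A.
Proof. by case: Hfan. Qed.
Let Hint : forall (A B : {set 'I_m}) (x : 'rV[R]_n), A \in C -> B \in C ->
  in_cone ray A x -> in_cone ray B x -> in_cone ray (A :&: B) x.
Proof. by case: Hfan. Qed.

Lemma dual_basis A : A \in C -> exists dub : 'I_m -> 'rV[int]_n,
  forall a i, a \in A -> i \in A -> ipr (dub a) (ray i) = (i == a)%:R.
Proof.
move=> /Hpob [B [detB hrow]].
have uB : B \in unitmx by rewrite unitmxE.
pose f i := [pick j | row j B == ray i].
have key : forall i, i \in A -> exists j, f i = Some j /\ row j B = ray i.
  move=> i iA; rewrite /f; case: pickP => [j /eqP Hj | H]; first by exists j.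
  by case: (hrow i iA) => j Hj; move: (H j); rewrite Hj eqxx.
exists (fun a => if f a is Some j then (col j (invmx B))^T else 0).
move=> a i aA iA.
case: (key a aA) => ja [Hfa Hja]; rewrite Hfa; case: (key i iA) => ji [Hfi Hji].
have -> : ipr (col ja (invmx B))^T (ray i) = (B *m invmx B) ji ja.
  rewrite /ipr mxE; apply: eq_bigr => k _.
  by rewrite -Hji !mxE mulrC.
rewrite mulmxV // mxE.
case: (eqVneq i a) => [eia | nia].
  by subst i; move: Hfi; rewrite Hfa => -[->]; rewrite eqxx.
have : ji != ja.
  apply/eqP => ejj; subst ji.
  have : ray i = ray a by rewrite -Hji -Hja.
  by move/Hinj => eia; rewrite eia eqxx in nia.
by move/negbTE => ->.
Qed.

Lemma coord_unique (A : {set 'I_m}) (c d : 'I_m -> R) : A \in C -> comb A c = comb A d ->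
  forall a, a \in A -> c a = d a.
Proof.
move=> HAC E a aA; case: (dual_basis HAC) => dub Hdu.
move: (congr1 (pv (rvR R (dub a))) E); rewrite !pv_comb.
rewrite (eq_bigr (fun i => c i * (i == a)%:R)); last first.
  by move=> i iA; rewrite pv_rvR Hdu // rmorph_nat.
rewrite [RHS](eq_bigr (fun i => d i * (i == a)%:R)); last first.
  by move=> i iA; rewrite pv_rvR Hdu // rmorph_nat.
by rewrite !sum_delta.
Qed.

Lemma coord_int (A : {set 'I_m}) (c : 'I_m -> R) (v : 'rV[int]_n) : A \in C -> rvR R v = comb A c ->
  forall a, a \in A -> exists z : int, c a = z%:~R.
Proof.
move=> HAC E a aA; case: (dual_basis HAC) => dub Hdu.
exists (ipr (dub a) v).
move: (congr1 (pv (rvR R (dub a))) E); rewrite pv_rvR pv_comb => ->.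
rewrite (eq_bigr (fun i => c i * (i == a)%:R)); last first.
  by move=> i iA; rewrite pv_rvR Hdu // rmorph_nat.
by rewrite sum_delta.
Qed.

Lemma coord_intf (A : {set 'I_m}) : A \in C -> exists f : 'rV[int]_n -> 'I_m -> int,
  forall (v : 'rV[int]_n) (c : 'I_m -> R), rvR R v = comb A c ->
  forall a, a \in A -> c a = (f v a)%:~R.
Proof.
move=> HAC; case: (dual_basis HAC) => dub Hdu.
exists (fun v a => ipr (dub a) v) => v c E a aA.
move: (congr1 (pv (rvR R (dub a))) E); rewrite pv_rvR pv_comb => ->.
rewrite (eq_bigr (fun i => c i * (i == a)%:R)); last first.
  by move=> i iA; rewrite pv_rvR Hdu // rmorph_nat.
by rewrite sum_delta.
Qed.

Lemma combD (A : {set 'I_m}) (c d : 'I_m -> R) : comb A (fun i => c i + d i) = comb A c + comb A d.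
Proof. by rewrite /comb -big_split; apply: eq_bigr => i _; rewrite scalerDl. Qed.

Lemma combZ (A : {set 'I_m}) (a : R) (c : 'I_m -> R) : comb A (fun i => a * c i) = a *: comb A c.
Proof. by rewrite /comb scaler_sumr; apply: eq_bigr => i _; rewrite scalerA. Qed.

Lemma combN (A : {set 'I_m}) (c : 'I_m -> R) : comb A (fun i => - c i) = - comb A c.
Proof.
rewrite -scaleN1r -combZ; apply: eq_bigr => i _; by rewrite mulN1r.
Qed.

Lemma combB (A : {set 'I_m}) (c d : 'I_m -> R) : comb A (fun i => c i - d i) = comb A c - comb A d.
Proof. by rewrite combD combN. Qed.

Lemma comb_const (A : {set 'I_m}) (t : R) : comb A (fun _ => t) = t *: wt A.
Proof. by rewrite /comb /wt scaler_sumr. Qed.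

Lemma comb_ext (A : {set 'I_m}) (c d : 'I_m -> R) : (forall i, i \in A -> c i = d i) -> comb A c = comb A d.
Proof. by move=> H; apply: eq_bigr => i iA; rewrite H. Qed.

Lemma comb_sub (A B : {set 'I_m}) (c : 'I_m -> R) : B \subset A ->
  comb B c = comb A (fun i => if i \in B then c i else 0).
Proof.
move=> BA; rewrite /comb.
rewrite [RHS](eq_bigr (fun i => if i \in B then c i *: rho i else 0)); last first.
  by move=> i _; case: ifP => _ //; rewrite scale0r.
rewrite -big_mkcondr; apply: eq_bigl => i.
by case iB: (i \in B); rewrite ?andbF ?andbT // (subsetP BA).
Qed.

Lemma coord_unique_sub (A B : {set 'I_m}) (c d : 'I_m -> R) : A \in C -> B \subset A -> comb A c = comb B d ->
  forall a, a \in A -> c a = (if a \in B then d a else 0).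
Proof.
move=> HAC BA E a aA; rewrite (comb_sub d BA) in E.
exact: (coord_unique HAC E aA).
Qed.

Lemma in_cone_sub (A B : {set 'I_m}) (x : 'rV[R]_n) : A \subset B -> in_cone ray A x -> in_cone ray B x.
Proof.
move=> AB [c [cp E]]; exists (fun i => if i \in A then c i else 0); split.
  by move=> i; case: ifP.
rewrite E; exact: (comb_sub c AB).
Qed.

Lemma set0C : set0 \in C.
Proof.
case: (Hcomplete 0) => A HAC _; apply: (Hsub HAC); exact: sub0set.
Qed.

Lemma ext_max (A : {set 'I_m}) : A \in C -> exists sigma, maximal_cone C sigma /\ A \subset sigma.
Proof.
move=> HAC.
pose P := [pred s : {set 'I_m} | (s \in C) && (A \subset s)].
have PA : P A by rewrite inE HAC subxx.
case: (@arg_maxnP _ A P (fun s : {set 'I_m} => #|s|) PA) => s /andP[sC As] Hmax.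
exists s; split => //; split => // B BC sB.
apply/esym/eqP; rewrite eqEcard sB /=.
apply: Hmax; rewrite inE BC /=; exact: subset_trans As sB.
Qed.

Lemma unbounded_sub (tau A : {set 'I_m}) (x : 'rV[R]_n) : tau \in C -> A \in C ->
  (forall M : nat, exists N : nat, (M <= N)%N /\ in_cone ray A (x + N%:R *: wt tau)) ->
  tau \subset A.
Proof.
move=> tC HAC H.
case: (H 0%N) => N1 [_ [c1 [c1p E1]]].
case: (H N1.+1) => N2 [lt12 [c2 [c2p E2]]].
have {}E1 : x + N1%:R *: wt tau = comb A c1 := E1.
have {}E2 : x + N2%:R *: wt tau = comb A c2 := E2.
set w := wt tau in E1 E2 H *.
have dpos : 0 < N2%:R - N1%:R :> R by rewrite subr_gt0 ltr_nat.
pose be i := (c2 i - c1 i) / (N2%:R - N1%:R).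
pose al i := c1 i - N1%:R * be i.
have Ew : w = comb A be.
  apply: (@scalerI _ _ (N2%:R - N1%:R)); first by rewrite gt_eqF.
  rewrite -combZ.
  rewrite (comb_ext (d := fun i => c2 i - c1 i)); last first.
    by move=> i _; rewrite /be mulrC divfK // gt_eqF.
  rewrite combB -E1 -E2 scalerBl; set y := N2%:R *: w; set z := N1%:R *: w.
  by rewrite opprD addrACA subrr add0r.
have Ex : x = comb A al.
  rewrite /al combB combZ -Ew -E1.
  by rewrite -addrA subrr addr0.
have bepos : forall a, a \in A -> 0 <= be a.
  move=> a aA; rewrite leNgt; apply/negP => bneg.
  pose y := `|al a| / (- be a).
  have nbpos : 0 < - be a by rewrite oppr_gt0.
  have y0 : 0 <= y by rewrite divr_ge0 // ltW.
  case: (H (Num.bound y)) => N [leN [c [cp EN]]].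
  have {}EN : x + N%:R *: w = comb A c := EN.
  have : x + N%:R *: w = comb A (fun i => al i + N%:R * be i).
    by rewrite combD combZ -Ex -Ew.
  rewrite EN => /coord_unique /(_ _ aA) => E.
  have ca := cp a; rewrite E ?HAC // in ca.
  have yb : y < N%:R.
    apply: (lt_le_trans (archi_boundP y0)); by rewrite ler_nat.
  move: yb; rewrite /y ltr_pdivrMr // => yb.
  have := ler_norm (al a).
  by move: ca yb; rewrite mulrN; lra.
have wA : in_cone ray A w.
  exists (fun i => if i \in A then be i else 0); split.
    by move=> i; case: ifP => // /bepos.
  by rewrite Ew (comb_sub be (subxx A)).
have wt' : in_cone ray tau w.
  exists (fun _ => 1); split; first by move=> i; exact: ler01.
  by rewrite /w /wt; apply: eq_bigr => i0 _; rewrite scale1r.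
case: (Hint HAC tC wA wt') => e [ep Ee].
have {}Ee : w = comb (A :&: tau) e := Ee.
have Ew1 : comb tau (fun _ => 1) = comb (A :&: tau) e.
  by rewrite -Ee comb_const scale1r.
apply/subsetP => a atau.
have := coord_unique_sub tC (subsetIr A tau) Ew1 atau.
by case: ifP => [/setIP[] // | _ /eqP]; rewrite oner_eq0.
Qed.

Lemma bound_cone (tau A : {set 'I_m}) (x : 'rV[R]_n) : tau \in C ->
  exists M : nat, forall N : nat, (M <= N)%N -> A \in C ->
    in_cone ray A (x + N%:R *: wt tau) -> tau \subset A.
Proof.
move=> tC.
case: (boolP (tau \subset A)) => tA; first by exists 0%N.
case: (boolP (A \in C)) => HAC; last by exists 0%N.
case: (classic (forall M : nat, exists N : nat, (M <= N)%N /\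
    in_cone ray A (x + N%:R *: wt tau))) => Hc.
  by rewrite (unbounded_sub tC HAC Hc) in tA.
case: (not_all_ex_not _ _ Hc) => M HM; exists M => N leN _ Hin.
by exfalso; apply: HM; exists N.
Qed.

Lemma Lstar (tau : {set 'I_m}) (x : 'rV[R]_n) : tau \in C ->
  exists sigma, [/\ maximal_cone C sigma, tau \subset sigma &
    exists t : R, exists c : 'I_m -> R, (forall i, 0 <= c i) /\
      x + t *: wt tau = comb sigma c].
Proof.
move=> tC.
have fin : forall s : seq {set 'I_m}, exists M : nat, forall A, A \in s ->
    forall N : nat, (M <= N)%N -> A \in C ->
    in_cone ray A (x + N%:R *: wt tau) -> tau \subset A.
  elim => [|A s [Ms HMs]]; first by exists 0%N.
  case: (bound_cone A x tC) => MA HA.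
  exists (maxn MA Ms) => B; rewrite inE => /orP[/eqP -> | Bs] N le.
    by apply: HA; apply: leq_trans le; rewrite leq_maxl.
  by apply: HMs => //; apply: leq_trans le; rewrite leq_maxr.
case: (fin (enum C)) => M HM.
case: (Hcomplete (x + M%:R *: wt tau)) => A HAC Hc.
have Ae : A \in enum C by rewrite mem_enum.
have tA := HM A Ae M (leqnn M) HAC Hc.
case: (ext_max HAC) => s [smax As].
exists s; split => //; first exact: subset_trans tA As.
exists M%:R; case: (in_cone_sub As Hc) => c [cp E]; exists c; split => //.
Qed.

Lemma span_max (s : {set 'I_m}) (x : 'rV[R]_n) : maximal_cone C s -> exists c, x = comb s c.
Proof.
move=> [sC smax].
case: (Lstar x sC) => s' [[s'C _] ss' [t [c [_ E]]]].
have es : s' = s by apply: smax.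
subst s'.
exists (fun i => c i - t); rewrite combB comb_const -E.
by rewrite addrK.
Qed.


Definition FanoU (tau s : {set 'I_m}) (u : 'rV[R]_n) : Prop :=
  [/\ forall i, i \in tau -> pairing u (ray i) = 0,
      forall i, i \in s -> i \notin tau -> pairing u (ray i) = 1 &
      forall j, j \notin s -> tau :|: [set j] \in C -> pairing u (ray j) < 1].

Lemma pv_comb_van u (tau s : {set 'I_m}) (c : 'I_m -> R) :
  (forall i, i \in tau -> pairing u (ray i) = 0) ->
  pv u (comb s c) = \sum_(i in s | i \notin tau) c i * pairing u (ray i).
Proof.
move=> H; rewrite pv_comb [RHS]big_mkcondr; apply: eq_bigr => i _.
case: (boolP (i \in tau)) => iT /=; first by rewrite -pairingE H // mulr0.
by rewrite pairingE.
Qed.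

Lemma pv_shift u (tau T : {set 'I_m}) (x : 'rV[R]_n) (t : R) : T \subset tau ->
  (forall i, i \in tau -> pairing u (ray i) = 0) ->
  pv u (x + t *: wt T) = pv u x.
Proof.
move=> Ts H; rewrite pvD pvZ pv_wt big1 ?mulr0 ?addr0 // => i iT.
by rewrite -pairingE H // (subsetP Ts).
Qed.

Lemma int01 (r : R) (z : int) : r = z%:~R -> 0 <= r -> r < 1 -> r = 0.
Proof.
move=> ->; rewrite ler0z ltrz1 => h1 h2.
by have -> : z = 0 by lia.
Qed.

Lemma int_ge1 (r : R) (z : int) : r = z%:~R -> 0 <= r -> r != 0 -> 1 <= r.
Proof.
move=> ->; rewrite ler0z intr_eq0 ler1z => h1 h2.
lia.
Qed.

Lemma int_eq1 (r : R) (z : int) : r = z%:~R -> 1 <= r -> r < 2 -> r = 1.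
Proof.
move=> ->; rewrite ler1z => h1; rewrite (_ : 2 = (2%:Z)%:~R) // ltr_int => h2.
by have -> : z = 1 by lia.
Qed.

Section FromI.
Hypothesis Hi : cond_i R ray C.

Lemma OS (tau : {set 'I_m}) z s u :
  tau \in C -> z \in tau -> maximal_cone C s -> tau \subset s -> FanoU tau s u ->
  forall j, (tau :\ z) :|: [set j] \in C -> pairing u (ray j) <= 1.
Proof.
move=> tC ztau smax ts [Hu0 Hu1 Hu2].
set t0 := tau :\ z.
have t0tau : t0 \subset tau by apply: subD1set.
have t0C : t0 \in C by apply: Hsub tC t0tau.
have t0z : t0 :|: [set z] = tau by rewrite setUC setD1K.
have Hu0' : forall i, i \in t0 -> pairing u (ray i) = 0.
  by move=> i it0; apply: Hu0; apply: (subsetP t0tau).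
case: (dual_basis tC) => dub Hdub.
set g := rvR R (dub z).
have gval : forall i, i \in tau -> pairing g (ray i) = (i == z)%:R.
  by move=> i itau; rewrite pairingE pv_rvR Hdub // rmorph_nat.
have gvan : forall i, i \in t0 -> pairing g (ray i) = 0.
  move=> i it0; rewrite gval ?(subsetP t0tau) //.
  by move: it0; rewrite in_setD1 => /andP[/negbTE -> _].
pose cnt j := #|[set i | pairing g (ray j) < pairing g (ray i)]|.
have step : forall j, (forall j', (cnt j' < cnt j)%N -> t0 :|: [set j'] \in C ->
    pairing u (ray j') <= 1) -> t0 :|: [set j] \in C -> pairing u (ray j) <= 1.
  move=> j IH hj.
  case: (boolP (j \in s)) => js.
    case: (boolP (j \in tau)) => jt; first by rewrite Hu0 // ler01.
    by rewrite Hu1.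
  case: (boolP (tau :|: [set j] \in C)) => tj; first by apply: ltW; apply: Hu2.
  have t0s : t0 \subset s := subset_trans t0tau ts.
  set p := rvR R (ray j + ray z).
  have pE : p = rho j + rho z by rewrite /p rvRD.
  case: (Lstar p t0C) => s1 [s1max t0s1 [t [d [dp E]]]].
  have s1C := s1max.1.
  have Ep : p + t *: wt t0 = comb s1 d := E.
  case: (Hi.2 t0 t0C s1 s1max t0s1) => u1 [Hv0 Hv1 Hv2].
  have hz : t0 :|: [set z] \in C by rewrite t0z.
  have le1 : forall i, t0 :|: [set i] \in C -> pairing u1 (ray i) <= 1.
    move=> i hi; case: (boolP (i \in s1)) => is1.
      case: (boolP (i \in t0)) => it0; first by rewrite Hv0 // ler01.
      by rewrite Hv1.
    by apply: ltW; apply: Hv2.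
  have lt2 : pairing u1 (ray j) + pairing u1 (ray z) < 2.
    case: (boolP (j \in s1)) => js1.
      case: (boolP (z \in s1)) => zs1.
        exfalso; move/negP: tj; apply; apply: (Hsub s1C).
        rewrite -t0z; apply/subsetP => i; rewrite !in_setU !in_set1.
        by case/orP => [/orP[it0|/eqP->]|/eqP->] //; exact: (subsetP t0s1).
      have := Hv2 z zs1 hz; have := le1 j hj; move=> h1 h2; lra.
    have := Hv2 j js1 hj; have := le1 z hz; move=> h1 h2; lra.
  have sum1 : pairing u1 (ray j) + pairing u1 (ray z) = \sum_(i in s1 | i \notin t0) d i.
    rewrite !pairingE -pvD -pE -(pv_shift p t (subxx t0) Hv0) Ep (pv_comb_van _ _ Hv0).
    by apply: eq_bigr => i /andP[is1 it0]; rewrite Hv1 // mulr1.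
  have pint : forall i, i \in s1 -> i \notin t0 -> exists zi : int, d i = zi%:~R.
    have Ep' : rvR R (ray j + ray z) = comb s1 (fun i => d i - (if i \in t0 then t else 0)).
      by rewrite combB -(comb_sub (fun _ => t) t0s1) comb_const -Ep addrK.
    move=> i is1 it0; case: (coord_int s1C Ep' is1) => zi hz'; exists zi.
    by rewrite -hz' (negbTE it0) subr0.
  have E1 : pairing u (ray j) = pv u p.
    by rewrite pE pvD -!pairingE (Hu0 z ztau) addr0.
  have E2 : pv u p = \sum_(i in s1 | i \notin t0) d i * pairing u (ray i).
    by rewrite -(pv_shift p t (subxx t0) Hu0') Ep (pv_comb_van _ _ Hu0').
  case: (boolP [forall i, (i \in s1) && (i \notin t0) ==> (d i == 0)]) => [/forallP H0 | ].
    rewrite E1 E2 big1 ?ler01 // => i /andP[is1 it0].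
    by move: (H0 i); rewrite is1 it0 /= => /eqP ->; rewrite mul0r.
  move=> /forallPn [a1]; rewrite negb_imply => /andP[/andP[a1s1 a1t0] da1].
  have da1ge : 1 <= d a1.
    by case: (pint a1 a1s1 a1t0) => za hza; apply: (int_ge1 hza (dp a1) da1).
  have others : forall i, i \in s1 -> i \notin t0 -> i != a1 -> d i = 0.
    move=> i is1 it0 ia1.
    have : d a1 + d i <= \sum_(i in s1 | i \notin t0) d i.
      rewrite (bigD1 a1) /=; last by rewrite a1s1 a1t0.
      rewrite lerD2l (bigD1 i) /=; last by rewrite is1 it0 ia1.
      by rewrite lerDl; apply: sumr_ge0 => k _; exact: dp.
    rewrite -sum1 => h.
    case: (pint i is1 it0) => zi hzi; apply: (int01 hzi (dp i)).
    by move: h lt2 da1ge; lra.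
  have da11 : d a1 = 1.
    have : d a1 <= \sum_(i in s1 | i \notin t0) d i.
      rewrite (bigD1 a1) /=; last by rewrite a1s1 a1t0.
      by rewrite lerDl; apply: sumr_ge0 => k _; exact: dp.
    rewrite -sum1 => h.
    case: (pint a1 a1s1 a1t0) => za hza; apply: (int_eq1 hza da1ge).
    by move: h lt2; lra.
  have sumF : forall F : 'I_m -> R, \sum_(i in s1 | i \notin t0) d i * F i = F a1.
    move=> F; rewrite (bigD1 a1) /=; last by rewrite a1s1 a1t0.
    rewrite da11 mul1r big1 ?addr0 // => i /andP[/andP[is1 it0] ia1].
    by rewrite others // mul0r.
  have vu : pairing u (ray j) = pairing u (ray a1) by rewrite E1 E2 sumF.
  have vg : pairing g (ray a1) = pairing g (ray j) + 1.
    have : pv g p = pairing g (ray j) + 1.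
      by rewrite pE pvD -!pairingE (gval z ztau) eqxx.
    by rewrite -(pv_shift p t (subxx t0) gvan) Ep (pv_comb_van _ _ gvan) sumF.
  have lt : (cnt a1 < cnt j)%N.
    apply: proper_card; apply/properP; split.
      apply/subsetP => i; rewrite !inE vg => h.
      by apply: lt_trans h; rewrite ltrDl ltr01.
    by exists a1; rewrite !inE ?vg ?ltxx // ltrDl ltr01.
  rewrite vu; apply: IH lt _.
  apply: (Hsub s1C); apply/subsetP => i; rewrite in_setU in_set1.
  by case/orP => [/(subsetP t0s1) // | /eqP ->].
suff H : forall N j, (cnt j <= N)%N -> t0 :|: [set j] \in C -> pairing u (ray j) <= 1.
  by move=> j; apply: (H (cnt j)).
elim=> [|N IH] j hc hj; apply: step hj => j' hlt hj'.
  by rewrite leqn0 in hc; rewrite (eqP hc) in hlt.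
by apply: IH hj'; rewrite -ltnS; apply: leq_trans hlt hc.
Qed.


Lemma Gle : forall N (tau : {set 'I_m}), #|tau| = N -> tau \in C ->
  forall s u, maximal_cone C s -> tau \subset s -> FanoU tau s u ->
  forall k, pairing u (ray k) <= 1.
Proof.
elim=> [|N IH] tau hcard tC s u smax ts Fu k.
  move: (cards0_eq hcard) => et; subst tau.
  case: Fu => [Hu0 Hu1 Hu2].
  case: (boolP (k \in s)) => ks; first by rewrite Hu1 ?inE.
  by apply: ltW; apply: Hu2 => //; rewrite set0U Hsing.
have : tau != set0 by rewrite -card_gt0 hcard.
case/set0Pn => z ztau.
set t0 := tau :\ z.
have t0tau : t0 \subset tau by apply: subD1set.
have t0C : t0 \in C by apply: Hsub tC t0tau.
have ct0 : #|t0| = N.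
  by move: (cardsD1 z tau); rewrite ztau hcard /= add1n => -[] ->.
case: (Fu) => [Hu0 Hu1 Hu2].
have Hu0' : forall i, i \in t0 -> pairing u (ray i) = 0.
  by move=> i it0; apply: Hu0; apply: (subsetP t0tau).
case: (Lstar (rho k) t0C) => s0 [s0max t0s0 [t [c [cp E]]]].
have Ek : rho k + t *: wt t0 = comb s0 c := E.
have s0C := s0max.1.
case: (Hi.2 t0 t0C s0 s0max t0s0) => u0 Fu0.
have IH0 := IH t0 ct0 t0C s0 u0 s0max t0s0 Fu0 k.
case: Fu0 => [Hv0 Hv1 Hv2].
have e0 : pairing u0 (ray k) = \sum_(i in s0 | i \notin t0) c i.
  rewrite pairingE -(pv_shift (rho k) t (subxx t0) Hv0) Ek (pv_comb_van _ _ Hv0).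
  by apply: eq_bigr => i /andP[is0 it0]; rewrite Hv1 // mulr1.
rewrite pairingE -(pv_shift (rho k) t (subxx t0) Hu0') Ek (pv_comb_van _ _ Hu0').
apply: le_trans IH0; rewrite e0; apply: ler_sum => i /andP[is0 it0].
apply: ler_piMr (cp i) _.
apply: (OS tC ztau smax ts Fu).
apply: (Hsub s0C); apply/subsetP => a; rewrite in_setU in_set1.
by case/orP => [/(subsetP t0s0) // | /eqP ->].
Qed.

Lemma Gle' (tau : {set 'I_m}) s u : tau \in C -> maximal_cone C s -> tau \subset s ->
  FanoU tau s u -> forall k, pairing u (ray k) <= 1.
Proof. by move=> tC; apply: (Gle (erefl #|tau|) tC). Qed.


Lemma i_iii : cond_iii R ray C.
Proof.
move=> mu mumax k b Eb.
have muC := mumax.1.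
have Ek : rho k = comb mu b := Eb.
have bnd : forall tau : {set 'I_m}, tau \subset mu -> \sum_(i in mu | i \notin tau) b i <= 1.
  move=> tau tmu; have tC := Hsub muC tmu.
  case: (Hi.2 tau tC mu mumax tmu) => u Fu.
  have := Gle' tC mumax tmu Fu k.
  case: Fu => [Hu0 Hu1 Hu2]; rewrite pairingE Ek (pv_comb_van _ _ Hu0).
  rewrite (eq_bigr (fun i => b i)) //.
  by move=> i /andP[imu it]; rewrite Hu1 // mulr1.
have bi1 : forall i, i \in mu -> b i <= 1.
  move=> i imu; have := bnd (mu :\ i) (subD1set mu i).
  rewrite (bigD1 i) /=; last by rewrite imu in_setD1 eqxx.
  rewrite big1 ?addr0 // => a /andP[/andP[amu anm] ai]; move: anm.
  by rewrite in_setD1 amu andbT negbK (negbTE ai).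
have bij : forall i j, i \in mu -> j \in mu -> i != j -> b i + b j <= 1.
  move=> i j imu jmu ij; have := bnd (mu :\: [set i; j]) (subsetDl _ _).
  rewrite (bigD1 i) /=; last by rewrite imu in_setD !inE eqxx.
  rewrite (bigD1 j) /=; last by rewrite jmu in_setD !inE eqxx orbT /= eq_sym.
  rewrite big1 ?addr0 ?addrA // => a /andP[/andP[/andP[amu anm] ai] aj]; move: anm.
  by rewrite in_setD !inE amu (negbTE ai) (negbTE aj).
have bge : forall i, i \in mu -> -1 <= b i.
  move=> i imu; case: (lerP 0 (b i)) => [h|bneg]; first by lra.
  set tau := mu :\ i.
  have tmu : tau \subset mu by apply: subD1set.
  have tC := Hsub muC tmu.
  case: (Lstar (rho k) tC) => s' [s'max ts' [t [c [cp E]]]].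
  have Ek' : rho k + t *: wt tau = comb s' c := E.
  have s'C := s'max.1.
  have itau : i \notin tau by rewrite in_setD1 eqxx.
  case: (boolP (i \in s')) => is'.
    have mus' : mu \subset s'.
      apply/subsetP => a amu; case: (eqVneq a i) => [-> // | ai].
      by apply: (subsetP ts'); rewrite in_setD1 ai amu.
    have es : s' = mu by apply: mumax.2.
    subst s'.
    have : comb mu c = comb mu (fun a => b a + (if a \in tau then t else 0)).
      by rewrite combD -(comb_sub (fun _ => t) tmu) comb_const -Ek.
    move/coord_unique => /(_ muC i imu); rewrite (negbTE itau) addr0 => eci.
    by move: (cp i); rewrite eci; lra.
  case: (Hi.2 tau tC s' s'max ts') => u' Fu'.
  have vle1 := Gle' tC s'max ts' Fu' k.
  case: Fu' => [Hw0 Hw1 Hw2].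
  have vk : pairing u' (ray k) = \sum_(a in s' | a \notin tau) c a.
    rewrite pairingE -(pv_shift (rho k) t (subxx tau) Hw0) Ek' (pv_comb_van _ _ Hw0).
    by apply: eq_bigr => a /andP[as' at']; rewrite Hw1 // mulr1.
  have vk2 : pairing u' (ray k) = b i * pairing u' (ray i).
    rewrite pairingE Ek (pv_comb_van _ _ Hw0) (bigD1 i) /=; last by rewrite imu itau.
    rewrite big1 ?addr0 // => a /andP[/andP[amu anm] ai]; move: anm.
    by rewrite in_setD1 amu andbT negbK (negbTE ai).
  have vilt : pairing u' (ray i) < 1.
    apply: Hw2 => //; by rewrite setUC setD1K.
  have viint : exists z : int, pairing u' (ray i) = z%:~R.
    case: (span_max (rho i) s'max) => g Eg.
    case: (coord_intf s'C) => f Hf.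
    exists (\sum_(a in s' | a \notin tau) f (ray i) a).
    rewrite pairingE Eg (pv_comb_van _ _ Hw0) rmorph_sum.
    apply: eq_bigr => a /andP[as' at']; rewrite Hw1 // mulr1.
    exact: Hf.
  have vne0 : pairing u' (ray i) != 0.
    apply/eqP => v0; move: vk; rewrite vk2 v0 mulr0 => /esym H0.
    have c0 : forall a, a \in s' -> a \notin tau -> c a = 0.
      move=> a as' at'; apply: (psumr_eq0P _ H0); first by move=> a0 _; exact: cp.
      by rewrite as' at'.
    have : comb mu b = comb tau (fun a => c a - t).
      rewrite -Ek combB comb_const; apply/eqP; rewrite eq_sym subr_eq; apply/eqP.
      rewrite Ek' (comb_sub c ts'); apply: comb_ext => a as'.
      by case: ifP => // /negbT at'; rewrite c0.
    move/(coord_unique_sub muC tmu) => /(_ i imu); rewrite (negbTE itau) => bi0.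
    by move: bneg; rewrite bi0 ltxx.
  case: viint => zi hzi.
  have vlem1 : pairing u' (ray i) <= -1.
    move: vilt vne0; rewrite hzi ltrz1 intr_eq0 => h1 h2.
    have : zi <= -1 by lia.
    by rewrite -(ler_int R) => h; apply: le_trans h _; rewrite rmorphN rmorph1.
  set v := pairing u' (ray i) in vk2 vlem1 *.
  have h0 : 0 <= b i * (v + 1) by apply: mulr_le0; lra.
  move: h0; rewrite mulrDr mulr1 => h0.
  by move: vle1; rewrite vk2 => h1; lra.
split.
  by move=> i imu; apply/andP; split; [exact: bge | exact: bi1].
rewrite leqNgt; apply/negP => /card_gt1P [x [y [hx hy hxy]]].
move: hx hy; rewrite !inE => /andP[xmu /eqP bx] /andP[ymu /eqP iy].
by have := bij x y xmu ymu hxy; rewrite bx iy; lra.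
Qed.

End FromI.

Lemma comb_delta (A : {set 'I_m}) a : a \in A -> comb A (fun i => (i == a)%:R) = rho a.
Proof.
move=> aA; rewrite /comb (bigD1 a) //= eqxx scale1r big1 ?addr0 // => i /andP[_ ia].
by rewrite (negbTE ia) scale0r.
Qed.

Lemma pv_sym (u x : 'rV[R]_n) : pv u x = pv x u.
Proof. by apply: eq_bigr => k _; rewrite mulrC. Qed.

Lemma fu_exists (s : {set 'I_m}) (f : 'I_m -> R) : s \in C ->
  exists u, forall i, i \in s -> pairing u (ray i) = f i.
Proof.
move=> sC; case: (dual_basis sC) => dub Hdu.
exists (\sum_(a in s) f a *: rvR R (dub a)) => i iS.
rewrite pairingE pv_sym pv_sum.
rewrite (eq_bigr (fun a => f a * (a == i)%:R)); last first.
  move=> a as_; rewrite pvZ pv_sym pv_rvR Hdu // rmorph_nat.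
  by rewrite eq_sym.
by rewrite sum_delta.
Qed.

Lemma prim_exists (X : {set 'I_m}) : X \notin C ->
  exists S, primitive_set C S /\ S \subset X.
Proof.
move=> XnC.
pose P := [pred Y : {set 'I_m} | (Y \subset X) && (Y \notin C)].
have PX : P X by rewrite inE subxx XnC.
case: (@arg_minnP _ X P (fun s : {set 'I_m} => #|s|) PX) => S /andP[SX SnC] Hmin.
exists S; split => //; split => // T TS.
apply/negPn/negP => TnC.
have := Hmin T; rewrite inE TnC andbT (subset_trans (proper_sub TS) SX) => /(_ isT).
by rewrite leqNgt (proper_card TS).
Qed.

Lemma pairing_sumS (u : 'rV[R]_n) (S : {set 'I_m}) k : k \in S ->
  pairing u (\sum_(i in S) ray i) = pairing u (ray k) + \sum_(a in S :\ k) pairing u (ray a).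
Proof.
move=> kS; rewrite pairingE rvR_sum pv_sum (bigD1 k) //= -pairingE; congr (_ + _).
apply: eq_big => [a|a _]; first by rewrite in_setD1 andbC.
by rewrite pairingE.
Qed.

Section FromII.
Hypothesis Hii : cond_ii ray C.

Lemma rel_lemma (s : {set 'I_m}) k : maximal_cone C s -> k \notin s ->
  exists S, [/\ primitive_set C S, k \in S, S :\ k \subset s, S :\ k != set0 &
    (\sum_(i in S) ray i = 0 \/ exists j, \sum_(i in S) ray i = ray j)].
Proof.
move=> [sC smax] ks.
have XnC : s :|: [set k] \notin C.
  apply/negP => XC; have := smax _ XC (subsetUl _ _) => E.
  by move: ks; rewrite -E in_setU in_set1 eqxx orbT.
case: (prim_exists XnC) => S [[SnC Sp] SX].
have kS : k \in S.
  apply/negPn/negP => kS; apply: (negP SnC); apply: (Hsub sC).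
  apply/subsetP => a aS; move: (subsetP SX a aS); rewrite in_setU in_set1.
  by case/orP => // /eqP eak; move: kS; rewrite -eak aS.
exists S; split => //.
- apply/subsetP => a; rewrite in_setD1 => /andP[ak aS].
  by move: (subsetP SX a aS); rewrite in_setU in_set1 (negbTE ak) orbF.
- apply/negP => /eqP Sk0; apply: (negP SnC); rewrite (_ : S = [set k]) ?Hsing //.
  apply/setP => a; rewrite in_set1; case: (eqVneq a k) => [->|ak] //.
  apply/negbTE/negP => aS.
  have : a \in S :\ k by rewrite in_setD1 ak aS.
  by rewrite Sk0 in_set0.
- exact: Hii.
Qed.

Lemma G2 (s : {set 'I_m}) (u : 'rV[R]_n) : maximal_cone C s ->
  (forall a, a \in s -> 0 <= pairing u (ray a) <= 1) ->
  forall k, pairing u (ray k) <= 1.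
Proof.
move=> smax Hu.
have sC := smax.1.
case: (fu_exists (fun _ => 1) sC) => h Hh.
pose cnt k := #|[set i | pairing h (ray k) < pairing h (ray i)]|.
have step : forall k, (forall k', (cnt k' < cnt k)%N -> pairing u (ray k') <= 1) ->
    pairing u (ray k) <= 1.
  move=> k IH.
  case: (boolP (k \in s)) => ks; first by case/andP: (Hu k ks).
  case: (rel_lemma smax ks) => S [Sp kS Sks Sk0 Hrel].
  have nn : 0 <= \sum_(a in S :\ k) pairing u (ray a).
    by apply: sumr_ge0 => a aS; case/andP: (Hu a (subsetP Sks a aS)).
  case: Hrel => [E0 | [j Ej]].
    have := pairing_sumS u kS; rewrite E0 /pairing big1 => [|i _]; last by rewrite mxE mulr0.
    by move=> h0; lra.
  have e1 := pairing_sumS u kS; rewrite Ej in e1.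
  have e2 := pairing_sumS h kS; rewrite Ej in e2.
  have hs : 1 <= \sum_(a in S :\ k) pairing h (ray a).
    case/set0Pn: Sk0 => a0 a0S; rewrite (bigD1 a0) //= Hh ?(subsetP Sks) //.
    rewrite lerDl; apply: sumr_ge0 => a /andP[aS _]; rewrite Hh ?(subsetP Sks) //.
  have lt : (cnt j < cnt k)%N.
    apply: proper_card; apply/properP; split.
      apply/subsetP => i; rewrite !inE => hi; apply: lt_trans hi.
      by rewrite e2; lra.
    by exists j; rewrite !inE ?ltxx // e2; lra.
  have := IH j lt; rewrite e1; lra.
suff H : forall N k, (cnt k <= N)%N -> pairing u (ray k) <= 1.
  by move=> k; apply: (H (cnt k)).
elim=> [|N IH] k hc; apply: step => k' hlt.
  by rewrite leqn0 in hc; rewrite (eqP hc) in hlt.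
by apply: IH; rewrite -ltnS; apply: leq_trans hlt hc.
Qed.

Lemma ii_i : cond_i R ray C.
Proof.
suff H : forall tau, tau \in C -> fano_orbit_closure R ray C tau.
  by split; [apply: H; exact: set0C | exact: H].
move=> tau tC s smax ts.
have sC := smax.1.
case: (fu_exists (fun a => if a \in tau then 0 else 1) sC) => u Hu.
have Hu0 : forall i, i \in tau -> pairing u (ray i) = 0.
  by move=> i it; rewrite Hu ?(subsetP ts) // it.
have Hu1 : forall i, i \in s -> i \notin tau -> pairing u (ray i) = 1.
  by move=> i iS it; rewrite Hu // (negbTE it).
have Hb : forall a, a \in s -> 0 <= pairing u (ray a) <= 1.
  by move=> a as_; rewrite Hu //; case: ifP => _; rewrite ?lexx ?ler01.
exists u; split => // j js tj.
case: (rel_lemma smax js) => S [[SnC Sp] jS Sjs Sj0 Hrel].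
have [a0 a0S a0t] : exists2 a0, a0 \in S :\ j & a0 \notin tau.
  case: (boolP [exists x in S :\ j, x \notin tau]) => [/exists_inP // | ]; rewrite negb_exists_in => /forall_inP H0; exfalso.
  apply: (negP SnC); apply: (Hsub tj); apply/subsetP => a aS.
  rewrite in_setU in_set1; case: (eqVneq a j) => [->|aj]; first by rewrite ?eqxx orbT.
  by have := H0 a; rewrite in_setD1 aj aS /= negbK => ->.
have hs : 1 <= \sum_(a in S :\ j) pairing u (ray a).
  rewrite (bigD1 a0) //= Hu1 ?(subsetP Sjs) //.
  rewrite lerDl; apply: sumr_ge0 => a /andP[aS _].
  by case/andP: (Hb a (subsetP Sjs a aS)).
case: Hrel => [E0 | [j' Ej]].
  have := pairing_sumS u jS; rewrite E0 /pairing big1 => [|i _]; last by rewrite mxE mulr0.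
  by move=> h0; lra.
have e1 := pairing_sumS u jS; rewrite Ej in e1.
have := G2 smax Hb j'; rewrite e1; lra.
Qed.

End FromII.

Section FromIII.
Hypothesis Hiii : cond_iii R ray C.

Lemma iii_ii : cond_ii ray C.
Proof.
move=> S [SnC Sp].
have : S != set0 by apply/eqP => S0; move: SnC; rewrite S0 set0C.
case/set0Pn => x xS.
set T := S :\ x.
have TS : T \proper S by apply: properD1.
have TC := Sp T TS.
case: (Lstar (rho x) TC) => s [smax Ts [t [c [cp E]]]].
have sC := smax.1.
have Ex : rho x + t *: wt T = comb s c := E.
have xs : x \notin s.
  apply/negP => xs; apply: (negP SnC); apply: (Hsub sC); apply/subsetP => a aS.
  case: (eqVneq a x) => [->//|ax]; apply: (subsetP Ts); by rewrite in_setD1 ax aS.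
pose b a := c a - (if a \in T then t else 0).
have Eb : rho x = comb s b.
  by rewrite combB -(comb_sub (fun _ => t) Ts) comb_const -Ex addrK.
case: (Hiii smax Eb) => Hb Hcard.
case: (coord_intf sC) => f Hf.
pose d a := b a + (if a \in T then 1 else 0).
have Es : rvR R (\sum_(i in S) ray i) = comb s d.
  rewrite rvR_sum (bigD1 x) //= combD -Eb -(comb_sub (fun _ => 1) Ts) comb_const scale1r.
  congr (_ + _); apply: eq_bigl => a; by rewrite in_setD1 andbC.
have dint : forall a, a \in s -> exists z : int, d a = z%:~R.
  move=> a as_; exists (f (ray x) a + (if a \in T then 1 else 0)).
  by rewrite /d (Hf _ _ Eb a as_) intrD; case: ifP.
have dnn : forall a, a \in s -> 0 <= d a.
  move=> a as_; rewrite /d /b; case: ifP => aT.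
    by case/andP: (Hb a as_); rewrite /b aT => h _; lra.
  by rewrite !subr0 !addr0; exact: cp.
have dT : forall a, a \in T -> d a = 0.
  move=> a aT; have as_ := subsetP Ts a aT.
  apply/eqP/negP => /negP da0.
  case: (dint a as_) => za hza.
  have da1 := int_ge1 hza (dnn a as_) da0.
  have ax : a != x by move: aT; rewrite in_setD1 => /andP[].
  have Sa : S :\ a \proper S by apply: properD1; move: aT; rewrite in_setD1 => /andP[_ ->].
  have SaC := Sp _ Sa.
  pose e i := if i \in s then d i - (i == a)%:R else 0.
  have w1 : in_cone ray s (rvR R (\sum_(i in S :\ a) ray i)).
    exists e; split.
      move=> i; rewrite /e; case: ifP => is_ //.
      case: (eqVneq i a) => [->|ia]; first by move: da1; rewrite ?mulr1n; lra.
      by rewrite subr0; exact: dnn.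
    have -> : rvR R (\sum_(i in S :\ a) ray i) = rvR R (\sum_(i in S) ray i) - rho a.
      rewrite [in RHS](bigD1 a) /=; last by move: aT; rewrite in_setD1 => /andP[].
      rewrite rvRD addrC addKr; congr (rvR R _); apply: eq_bigl => i.
      by rewrite in_setD1 andbC.
    rewrite Es -(comb_delta as_) -combB; apply: eq_bigr => i is_.
    by rewrite /e is_.
  have w2 : in_cone ray (S :\ a) (rvR R (\sum_(i in S :\ a) ray i)).
    exists (fun _ => 1); split; first by move=> i; exact: ler01.
    by rewrite rvR_sum; apply: eq_bigr => i _; rewrite scale1r.
  case: (Hint sC SaC w1 w2) => e' [_ Ee'].
  have {}Ee' : rvR R (\sum_(i in S :\ a) ray i) = comb (s :&: (S :\ a)) e' := Ee'.
  have Ew : comb (S :\ a) (fun _ => 1) = comb (s :&: (S :\ a)) e'.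
    by rewrite -Ee' comb_const scale1r rvR_sum.
  have xSa : x \in S :\ a by rewrite in_setD1 eq_sym ax xS.
  have := coord_unique_sub SaC (subsetIr _ _) Ew xSa.
  by rewrite in_setI (negbTE xs) /= => /eqP; rewrite oner_eq0.
case: (boolP [exists a, (a \in s) && (d a != 0)]) => [/existsP [a1 /andP[a1s da1]] | ].
  right; exists a1; apply: rvR_inj; rewrite Es.
  have a1T : a1 \notin T by apply/negP => /dT; apply/eqP.
  have db : forall a, a \in s -> a \notin T -> d a = b a.
    by move=> a _ aT; rewrite /d (negbTE aT) addr0.
  have b1 : forall a, a \in s -> d a != 0 -> a \notin T /\ b a = 1.
    move=> a as_ da; have aT : a \notin T by apply/negP => /dT; apply/eqP.
    split => //; case: (dint a as_) => za hza.
    have := int_ge1 hza (dnn a as_) da; rewrite db // => h1.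
    by case/andP: (Hb a as_) => _ h2; apply/le_anti; rewrite h1 h2.
  have others : forall a, a \in s -> a != a1 -> d a = 0.
    move=> a as_ aa1; apply/eqP/negP => /negP da.
    have [_ ba] := b1 a as_ da; have [_ ba1] := b1 a1 a1s da1.
    have : (1 < #|[set i in s | b i == 1%R]|)%N.
      apply/card_gt1P; exists a, a1; rewrite !inE as_ a1s ba ba1 eqxx; split => //.
    by rewrite ltnNge Hcard.
  have [_ ba1] := b1 a1 a1s da1.
  rewrite /comb (bigD1 a1) //= (db a1 a1s a1T) ba1 scale1r big1 ?addr0 //.
  by move=> i /andP[is_ ia]; rewrite others // scale0r.
rewrite negb_exists => /forallP H0; left; apply: rvR_inj; rewrite Es rvR0.
rewrite /comb big1 // => i is_; move: (H0 i); rewrite is_ /= negbK => /eqP ->.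
by rewrite scale0r.
Qed.

End FromIII.
End Toric.

Theorem theorem3p1 (R : realType) (n m : nat) (ray : 'I_m -> 'rV[int]_n)
  (C : {set {set 'I_m}})
  (Hfan : smooth_fan R ray C) (Hcomplete : complete_fan R ray C) :
  (cond_i R ray C <-> cond_ii ray C) /\ (cond_ii ray C <-> cond_iii R ray C).
Proof.
have h12 := ii_i Hfan Hcomplete.
have h13 := i_iii Hfan Hcomplete.
have h32 := iii_ii Hfan Hcomplete.
split; split => H.
- exact: h32 (h13 H).
- exact: h12 H.
- exact: h13 (h12 H).
- exact: h32 H.
Qed.
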